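(* Let $w=a_0a_1\cdots a_k$ and $w'=b_0b_1\cdots b_k$ be admissible $(k+1)$-words, let $p$ be the fundamental period of $w$, and suppose there is a non-negative integer $i_0$ which is the smallest non-negative integer with $b_0\cdots b_{k-i_0}=a_{i_0}\cdots a_k$. Let $i$ be a positive integer with $i\le k$ and $b_0\cdots b_{k-i}=a_i\cdots a_k$. Then either $p$ divides $i-i_0$ or $i\ge k+2-p$.
   Context: Let $\mathcal{A}$ be a finite alphabet and $T=(T_{x,y})$ a square matrix indexed by $\mathcal{A}$ with entries in $\{0,1\}$. An admissible $m$-word is a string $u_1\cdots u_m$ with $T_{u_{i+1},u_i}=1$ for all $i$. For an admissible $k$-word $u=u_1\cdots u_k$, $h(u)$ is the least non-negative integer $h$ such that $u$ is the only admissible $k$-word beginning with $u_1\cdots u_{h+1}$. For an admissible $(k+1)$-word $w=a_0a_1\cdots a_k$, let $d=h(a_1\cdots a_k)$; the fundamental period of $w$ is the smallest integer $p$ with $1\le p\le d$ and $a_0a_1\cdots a_{k-p}=a_p\cdots a_k$, and $p=k+1$ if no such integer exists. *)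

(* Defs.v *)
From mathcomp Require Import all_boot.
Set Implicit Arguments. Unset Strict Implicit. Unset Printing Implicit Defensive.

Section Words.
Variables (A : finType) (T : A -> A -> bool).

(* u_1 ... u_m is admissible iff T u_{i+1} u_i = 1 for all i;
   words are sequences, u_1 being the head. *)
Definition admissible (u : seq A) : bool := sorted (fun x y => T y x) u.

Definition uniq_depth (u : seq A) (h : nat) : bool :=
  [forall v : (size u).-tuple A,
     (admissible v && (take h.+1 v == take h.+1 u)) ==> (val v == u)].

(* h(u): the least such h (h = size u always qualifies, so the search
   over 0..size u finds it). *)
Definition hval (u : seq A) : nat := find (uniq_depth u) (iota 0 (size u).+1).

(* fundamental period of w = a_0 a_1 ... a_k (k = size w - 1):
   smallest p with 1 <= p <= d := h(a_1...a_k) and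
   a_0 ... a_{k-p} = a_p ... a_k, and k+1 if there is none. *)
Definition fund_period (w : seq A) : nat :=
  let k := (size w).-1 in
  let d := hval (behead w) in
  let l := find (fun p => take (k.+1 - p) w == drop p w) (iota 1 d) in
  if l < d then l.+1 else k.+1.

End Words.

(* Main.v *)
Require Import Defs.
From mathcomp Require Import all_boot.
From mathcomp Require Import zify.

Section Aux.
Variable A : finType.

Lemma per_eq (s : seq A) x0 r :
  (take (size s - r) s = drop r s) <->
  (forall t, t + r < size s -> nth x0 s t = nth x0 s (t + r)).
Proof.
split.
- move=> E t Ht. have := congr1 (fun u => nth x0 u t) E.
  rewrite nth_take; last by lia.
  by rewrite nth_drop addnC.
- move=> H. apply: (eq_from_nth (x0:=x0)).
    rewrite size_take size_drop; case: ifP; lia.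
  move=> t; rewrite size_take; move=> Ht.
  rewrite nth_take; last by move: Ht; case: ifP; lia.
  rewrite nth_drop addnC H //. move: Ht; case: ifP; lia.
Qed.

Definition per (f : nat -> A) M r := forall t, t + r < M -> f t = f (t + r).

Lemma fw n : forall f M p q, p + q <= n -> 0 < p -> 0 < q -> p + q <= M ->
  per f M p -> per f M q -> per f M (gcdn p q).
Proof.
elim: n => [|n IH] f M p q Hn Hp Hq HM Pp Pq; first by lia.
wlog Hpq : p q Hn Hp Hq HM Pp Pq / p <= q.
  move=> W; case: (leqP p q) => H; first exact: W.
  rewrite gcdnC; apply: W => //; lia.
case: (ltngtP p q) Hpq => // [Hlt|->] _; last by rewrite gcdnn.
have Pqp : per f M (q - p).
  move=> t Ht.
  case: (ltnP (t + q) M) => H.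
    rewrite (Pq t H).
    have -> : t + q = (t + (q - p)) + p by lia.
    rewrite -Pp //; lia.
  have Ht0 : t = (t - p) + p by lia.
  rewrite Ht0 -Pp; last by lia.
  rewrite Pq; last by lia.
  congr f; lia.
have -> : gcdn p q = gcdn p (q - p).
  by rewrite -[in LHS](subnK (ltnW Hlt)) gcdnDr.
apply: IH => //; lia.
Qed.

Lemma per_mod (f : nat -> A) M p x y : 0 < p -> per f M p ->
  x < M -> y < M -> x = y %[mod p] -> f x = f y.
Proof.
move=> Hp P.
wlog Hxy : x y / x <= y.
  move=> W Hx Hy E; case: (leqP x y) => H; first exact: W.
  symmetry; apply: W => //; lia.
move=> Hx Hy E.
have : p %| y - x by rewrite -eqn_mod_dvd // E.
case/dvdnP => m Hm.
have Ey : y = x + m * p by lia.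
rewrite Ey in Hy *; clear Hm E Ey Hxy.
elim: m Hy => [|m IHm] Hy; first by rewrite addn0.
rewrite IHm; last by lia.
have -> : x + m.+1 * p = (x + m * p) + p by rewrite mulSn; lia.
apply: P; lia.
Qed.

Variable T : A -> A -> bool.

Lemma fp_spec (w : seq A) n : size w = n.+1 ->
  let p := fund_period T w in
  p = n.+1 \/ [/\ 0 < p, p <= hval T (behead w), take (size w - p) w = drop p w &
     forall r, 0 < r -> r <= hval T (behead w) -> take (size w - r) w = drop r w -> p <= r].
Proof.
move=> Hs /=; rewrite /fund_period Hs /=.
set d := hval T (behead w).
set P := fun p => _.
set l := find P (iota 1 d).
case: ifP => Hl; [right|by left].
have HP : P l.+1.
  have := nth_find 0 (_ : has P (iota 1 d)).
  rewrite nth_iota // add1n; apply.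
  by rewrite has_find size_iota.
split => //.
- exact/eqP.
- move=> r Hr Hrd E; rewrite ltnNge; apply/negP => Hrl.
  have := before_find 0 (_ : r.-1 < l).
  rewrite nth_iota; last by lia.
  have -> : 1 + r.-1 = r by lia.
  rewrite /P E eqxx => H; by have := H ltac:(lia).
Qed.
End Aux.

Theorem lemma4p1 (A : finType) (T : A -> A -> bool) (k : nat)
  (w w' : seq A) (i0 : nat) :
  size w = k.+1 -> admissible T w ->
  size w' = k.+1 -> admissible T w' ->
  (* b_0 ... b_{k-i0} = a_{i0} ... a_k *)
  take (k.+1 - i0) w' = drop i0 w ->
  (* i0 is the smallest such *)
  (forall j, j < i0 -> take (k.+1 - j) w' <> drop j w) ->
  forall i : nat, 0 < i -> i <= k ->
  take (k.+1 - i) w' = drop i w ->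
  fund_period T w %| (i - i0) \/ k.+2 - fund_period T w <= i.
Proof.
move=> Hsw _ Hsw' _ Hi0 Hmin i Hi Hik Hii.
have x0 : A.
  destruct w as [|x ?]; [discriminate Hsw | exact x].
have Hi0i : i0 <= i.
  rewrite leqNgt; apply/negP => H; exact: Hmin i H Hii.
case: (@fp_spec A T w k Hsw) => [->|[Hp Hpd Pw Hmn]]; first by right; lia.
move: Hp Hpd Pw Hmn; set p := fund_period T w => Hp Hpd Pw Hmn.
case: (leqP (k.+2 - p) i) => Hip; first by right.
left.
case: (posnP (i - i0)) => [->|Hq]; first exact: dvdn0.
move: Hq; set q := i - i0 => Hq.
set f := fun t => nth x0 w (i0 + t).
set M := k.+1 - i0.
have Pw' := proj1 (@per_eq A w x0 p) Pw; rewrite Hsw in Pw'.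
have Pw2 : @per A (nth x0 w) k.+1 p := Pw'.
have Hm1 : forall t, t < k.+1 - i0 -> nth x0 w' t = nth x0 w (i0 + t).
  move=> t Ht; have := congr1 (fun u => nth x0 u t) Hi0.
  by rewrite nth_take // nth_drop.
have Hm2 : forall t, t < k.+1 - i -> nth x0 w' t = nth x0 w (i + t).
  move=> t Ht; have := congr1 (fun u => nth x0 u t) Hii.
  by rewrite nth_take // nth_drop.
have Pfp : @per A f M p.
  move=> t Ht; rewrite /f addnA; apply: Pw'; lia.
have Pfq : @per A f M q.
  move=> t Ht; rewrite /f -Hm1; last by lia.
  have -> : i0 + (t + q) = i + t by lia.
  rewrite -Hm2 //; lia.
have Pg := @fw A (p + q) f M p q (leqnn _) Hp Hq ltac:(lia) Pfp Pfq.
move: Pg; set g := gcdn p q => Pg.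
have Hg0 : 0 < g by rewrite gcdn_gt0 Hp.
have Hgp : g <= p by apply: dvdn_leq => //; exact: dvdn_gcdl.
have Hgq : g <= q by apply: dvdn_leq => //; exact: dvdn_gcdr.
have Pwg : take (size w - g) w = drop g w.
  apply/(@per_eq A w x0 g) => t Ht; rewrite Hsw in Ht.
  set m := (t + p * i0 - i0) %% p.
  have Hm : m < p := ltn_pmod _ Hp.
  set R := i0 + m.
  have HR : R = t %[mod p].
    rewrite /R /m modnDmr.
    have := leq_pmull i0 Hp => Hle.
    have -> : i0 + (t + p * i0 - i0) = i0 * p + t by rewrite [i0 * p]mulnC; lia.
    by rewrite modnMDl.
  have HR0 : R = i0 + m by [].
  clearbody R m.
  rewrite (@per_mod A _ _ p t R Hp Pw2); [| lia | lia | by rewrite HR].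
  rewrite (@per_mod A _ _ p (t + g) (R + g) Hp Pw2); [| lia | lia | by rewrite -(modnDml R) HR modnDml].
  have := Pg (R - i0) ltac:(lia); rewrite /f.
  have -> : i0 + (R - i0) = R by lia.
  by have -> : i0 + (R - i0 + g) = R + g by lia.
have Hpg := Hmn g Hg0 (leq_trans Hgp Hpd) Pwg.
have -> : p = g by apply/eqP; rewrite eqn_leq Hpg Hgp.
exact: dvdn_gcdr.
Qed.
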